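(* In the hardware model described in the context, and for a program obeying the well-behavedness rules below, suppose a thread $T_i$ tags a node $n$ at time $t_t$ while $n$ is reachable in its data structure. If some thread $T_j$ frees $n$ at a time $t_f$ with $t_t < t_f$, then any conditional access to $n$ by $T_i$ at a time $t_d > t_f$ (with no re-tagging of $n$ by $T_i$ in between) fails. In particular, a conditional access never succeeds on a node that has been freed since it was tagged.
   Context: Model: threads operate on a shared memory organized into nodes, with a cache-coherence mechanism (e.g. MSI/MESI). Each thread maintains a set of tagged locations. Conditional-access instructions cread (read) and cwrite (write) satisfy: (P1) a conditional access atomically tags the accessed node on its first access by the thread and then conditionally performs the read/write; (P2) a conditional access succeeds only if none of the thread's tagged locations has been invalidated since it was tagged (on failure all tags are removed and the operation restarts); (P3) when a location is written, all cached copies at other threads are invalidated, thereby invalidating any tags on it held by other threads; (P4) conditional accesses may fail spuriously but never succeed spuriously. Well-behavedness: all shared-memory reads and writes of data-structure operations use cread/cwrite; reclaimer rule: a thread frees a node only after unlinking it and then writing to (marking) it; only one thread may free a given node.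
   Formalization: The thread $T_j$ that frees n is distinct from $T_i$, and no re-tagging of n by $T_i$ occurs at any time in $(t_t, t_d]$, the access at $t_d$ included. Each condition added here is assumed in the paper as well or is needed for the statement above to hold. *)

(* Defs.v *)
From mathcomp Require Import all_boot.
Set Implicit Arguments. Unset Strict Implicit. Unset Printing Implicit Defensive.

Section Model.
Variables (Thread Node : eqType).

(* Hardware tag state: [tagged t n] = thread t currently holds a tag on n;
   [invalid t n] = that tag has been invalidated since it was placed. *)
Record hwstate := HwState {
  tagged  : Thread -> Node -> bool;
  invalid : Thread -> Node -> bool }.

Inductive access_kind := CRead | CWrite.

(* Well-behavedness requires that every
   shared-memory read/write of data-structure operations is a conditional
   access, so there are no plain memory accesses among the events. *)
Inductive event :=
  | Acc   of Thread & access_kind & Node & bool  (* cread/cwrite; bool = succeeded *)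
  | Free  of Thread & Node
  | Evict of Thread & Node                       (* spurious invalidation (e.g. eviction) *)
  | Local of Thread.

Definition acc_step (s s' : hwstate) (i : Thread) (k : access_kind) (n : Node)
    (ok : bool) : Prop :=
  let first := ~~ tagged s i n in
  (* (P1) atomically tag the node on its first access (fresh tag: not invalidated) *)
  let tg1 := fun i' m => tagged s i' m || ((i' == i) && (m == n)) in
  let iv1 := fun i' m => invalid s i' m && ~~ [&& first, i' == i & m == n] in
  (* (P2) the access may succeed only if no tagged location was invalidated *)
  let valid := forall m, tg1 i m -> ~~ iv1 i m in
  if ok then
    valid /\ tagged s' = tg1 /\
    (* (P3) a write invalidates the copies (hence tags) held by other threads *)
    invalid s' = (fun i' m => iv1 i' m ||
        [&& (if k is CWrite then true else false), m == n, i' != i & tg1 i' m])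
  else
    (* failure (possibly spurious, P4): all tags of [i] are removed *)
    tagged s' = (fun i' m => tg1 i' m && (i' != i)) /\
    invalid s' = (fun i' m => iv1 i' m && (i' != i)).

Definition step (s : hwstate) (e : event) (s' : hwstate) : Prop :=
  match e with
  | Acc i k n ok => acc_step s s' i k n ok
  | Evict i n => tagged s' = tagged s /\
      invalid s' = (fun i' m => invalid s i' m || ((i' == i) && (m == n)))
  | Free _ _ | Local _ => s' = s
  end.

(* An execution: states before each time step, the event performed at each
   time step, and the (program-level, abstract) reachability of nodes in the
   data structure at each time. *)
Record execution := Execution {
  st    : nat -> hwstate;
  ev    : nat -> event;
  reach : nat -> Node -> Prop;
  steps : forall t, step (st t) (ev t) (st t.+1) }.

Definition tags_at (X : execution) (t : nat) (i : Thread) (n : Node) : Prop :=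
  exists k ok, ev X t = Acc i k n ok /\ ~~ tagged (st X t) i n.

(* Reclaimer rule: a thread frees a node only after unlinking it (from then on
   it is unreachable) and then writing to (marking) it; only one thread
   (indeed, one free event) frees a given node. *)
Definition well_behaved (X : execution) : Prop :=
  (forall tf j n, ev X tf = Free j n ->
     exists tu tw, [/\ tu < tw, tw < tf,
       (forall t, tu <= t <= tf -> ~ reach X t n) &
       ev X tw = Acc j CWrite n true]) /\
  (forall t t' j j' n, ev X t = Free j n -> ev X t' = Free j' n -> t = t').

End Model.

(* Main.v *)
From Pilot Require Import Defs.
From mathcomp Require Import all_boot zify.

Local Notation tagged := Pilot.Defs.tagged.
Section H.
Variables (Thread Node : eqType).


Lemma tag_back (s s' : hwstate Thread Node) (e : event Thread Node) Ti n :
  step s e s' -> tagged s' Ti n -> ~~ tagged s Ti n ->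
  exists k ok, e = Acc Ti k n ok.
Proof.
case: e => [i k m ok|i m|i m|i] /=.
- rewrite /acc_step; case: ok => [[_ [-> _]]|[-> _]] /= H Hn.
  + move: H; rewrite (negbTE Hn) /= => /andP [/eqP <- /eqP <-]; by exists k, true.
  + move: H; rewrite (negbTE Hn) /= => /andP [/andP [/eqP <- /eqP <-] _].
    by exists k, false.
- move=> -> H Hn; by rewrite H in Hn.
- by move=> [-> _] H Hn; rewrite H in Hn.
- by move=> -> H Hn; rewrite H in Hn.
Qed.

Lemma inv_fwd (s s' : hwstate Thread Node) (e : event Thread Node) Ti n :
  step s e s' -> invalid s Ti n -> tagged s Ti n -> tagged s' Ti n ->
  invalid s' Ti n.
Proof.
case: e => [i k m ok|i m|i m|i] /=.
- rewrite /acc_step; case: ok => [[_ [_ ->]]|[Ht ->]] /= Hi Ht0 Ht1.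
  + rewrite Hi Ht0 /=. apply/orP; left.
    by case: eqP => [<-|]; case: eqP => [<-|] //=; rewrite ?Ht0 ?andbF.
  + move: Ht1; rewrite Ht /= Hi Ht0 /= => ->; rewrite andbT.
    by case: eqP => [<-|]; case: eqP => [<-|] //=; rewrite ?Ht0 ?andbF.
- by move=> ->.
- by move=> [_ ->] /= ->.
- by move=> ->.
Qed.

Lemma write_inv (s s' : hwstate Thread Node) j Ti n :
  acc_step s s' j CWrite n true -> Ti != j -> tagged s Ti n -> invalid s' Ti n.
Proof.
rewrite /acc_step => [[_ [_ ->]]] Hne Ht /=.
by rewrite eqxx Hne Ht /= orbT.
Qed.

Lemma final (s s' : hwstate Thread Node) Ti k n :
  acc_step s s' Ti k n true -> tagged s Ti n -> invalid s Ti n -> False.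
Proof.
rewrite /acc_step => [[V _]] Ht Hi.
have := V n; rewrite !Ht /= Hi /= => H; by move: (H isT).
Qed.
End H.

Theorem theorem1 (Thread Node : eqType) (X : execution Thread Node)
  (Hwb : well_behaved X) (Ti Tj : Thread) (n : Node) (t_t t_f t_d : nat)
  (k : access_kind) (ok : bool) :
  tags_at X t_t Ti n ->
  reach X t_t n ->
  ev X t_f = Free Tj n ->
  Ti != Tj ->
  t_t < t_f ->
  t_f < t_d ->
  (forall t, t_t < t <= t_d -> ~ tags_at X t Ti n) ->
  ev X t_d = Acc Ti k n ok ->
  ok = false.
Proof.
move=> Htag Hreach Hfree Hne Htf Hfd Hno Hd.
have Ttd : tagged (st X t_d) Ti n.
  apply/negPn/negP => Hn; apply: (Hno t_d); first by apply/andP; split => //; apply: ltn_trans Hfd.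
  by exists k, ok.
have Tall : forall d, d <= t_d - t_t.+1 -> tagged (st X (t_d - d)) Ti n.
  elim => [|d IH] Hd'; first by rewrite subn0.
  have IH' := IH (ltnW Hd').
  have E : t_d - d = (t_d - d.+1).+1 by lia.
  rewrite E in IH'.
  apply/negPn/negP => Hn.
  have [k' [ok' He]] := @tag_back _ _ _ _ _ _ _ (steps X (t_d - d.+1)) IH' Hn.
  apply: (Hno (t_d - d.+1)); last by exists k', ok'.
  apply/andP; split; lia.
have Tin : forall t, t_t < t <= t_d -> tagged (st X t) Ti n.
  move=> t /andP [H1 H2].
  have -> : t = t_d - (t_d - t) by lia.
  apply: Tall; lia.
case: Hwb => [Hw _].
have [tu [tw [Huw Hwf Hun Hwev]]] := Hw _ _ _ Hfree.
have Htu : t_t < tu.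
  rewrite ltnNge; apply/negP => Hle; apply: (Hun t_t) => //.
  by apply/andP; split => //; apply: ltnW.
have Iw : invalid (st X tw.+1) Ti n.
  have := steps X tw; rewrite Hwev /= => S.
  apply: (@write_inv _ _ _ _ _ _ _ S Hne); apply: Tin; apply/andP; split; lia.
have Iall : forall d, d <= t_d - tw.+1 -> invalid (st X (tw.+1 + d)) Ti n.
  elim => [|d IH] Hd'; first by rewrite addn0.
  rewrite addnS.
  apply: (@inv_fwd _ _ _ _ _ _ _ (steps X _) (IH (ltnW Hd'))); apply: Tin; apply/andP; split; lia.
have Id : invalid (st X t_d) Ti n.
  have -> : t_d = tw.+1 + (t_d - tw.+1) by lia.
  by apply: Iall.
case: ok Hd => // Hd.
have := steps X t_d; rewrite Hd /= => S.
by case: (@final _ _ _ _ _ _ _ S Ttd Id).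
Qed.
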